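(* There is $p=O(\log n)$ such that $D^{p}(\textsc{IndSub}(\text{co-}P_3))=\tilde O(n)$.
   Context: $\text{co-}P_3$ is the complement of the path on three vertices (one edge plus an isolated vertex). Insertion-only streaming model: the edges of an $n$-vertex undirected input graph $G$ arrive as a stream in arbitrary order; the algorithm knows $n$, makes $p$ passes, and has $S$ bits of memory. $\textsc{IndSub}(H)$: decide whether $G$ contains $H$ as an induced subgraph and if so output the vertex set of a copy. $D^p(\Pi)$ is the minimum space of a deterministic $p$-pass streaming algorithm solving $\Pi$. $\tilde O$ hides polylogarithmic factors in $n$. *)

(* Defs.v *)
From mathcomp Require Import all_boot.
Set Implicit Arguments. Unset Strict Implicit. Unset Printing Implicit Defensive.

Definition simple_graph (n : nat) (E : {set {set 'I_n}}) : Prop :=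
  forall x, x \in E -> #|x| = 2.

Definition edge_stream (n : nat) (E : {set {set 'I_n}}) (s : seq {set 'I_n}) : Prop :=
  perm_eq s (enum E).

(* A T-vertex set induces a copy of co-P3 (one edge plus an isolated vertex)
   iff it has 3 vertices and the induced subgraph has exactly one edge. *)
Definition induces_coP3 (n : nat) (E : {set {set 'I_n}}) (T : {set 'I_n}) : Prop :=
  #|T| = 3 /\ #|[set x in E | x \subset T]| = 1.

Definition memory (S : nat) := {ffun 'I_S -> bool}.

(* A deterministic multi-pass streaming algorithm with S bits of memory on
   n-vertex graphs (knows n; arbitrary computation per step). *)
Record stream_alg (n S : nat) := StreamAlg {
  sa_init : memory S;
  sa_step : memory S -> {set 'I_n} -> memory S;
  sa_endpass : memory S -> memory S;
  sa_out : memory S -> option {set 'I_n}          (* None = no copy *)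
}.

Definition run_passes (n S : nat) (A : stream_alg n S) (p : nat)
    (s : seq {set 'I_n}) : memory S :=
  iter p (fun m => sa_endpass A (foldl (sa_step A) m s)) (sa_init A).

Definition output (n S : nat) (A : stream_alg n S) (p : nat) (s : seq {set 'I_n}) :=
  sa_out A (run_passes A p s).

Definition solves_IndSub_coP3 (n S : nat) (A : stream_alg n S) (p : nat) : Prop :=
  forall (E : {set {set 'I_n}}) (s : seq {set 'I_n}),
    simple_graph E -> edge_stream E s ->
    match output A p s with
    | Some T => induces_coP3 E T
    | None => forall T, ~ induces_coP3 E T
    end.

(* Main.v *)
Require Import Defs.
From mathcomp Require Import all_boot.
From mathcomp Require Import zify.
Set Implicit Arguments. Unset Strict Implicit. Unset Printing Implicit Defensive.

Section Sim.
Variables (n S : nat) (X : finType) (enc : X -> memory S).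
Hypothesis enc_inj : injective enc.
Variables (init : X) (step : X -> {set 'I_n} -> X) (endp : X -> X)
  (out : X -> option {set 'I_n}).
Definition dec (m : memory S) : X := odflt init [pick x | enc x == m].
Lemma encK : cancel enc dec.
Proof.
move=> x; rewrite /dec; case: pickP => [y /eqP /enc_inj -> //|].
by move/(_ x); rewrite eqxx.
Qed.
Definition simA : stream_alg n S :=
  StreamAlg (enc init) (fun m e => enc (step (dec m) e))
    (fun m => enc (endp (dec m))) (fun m => out (dec m)).
Lemma sim_fold s x : foldl (sa_step simA) (enc x) s = enc (foldl step x s).
Proof. elim: s x => [|e s IH] x //=. by rewrite encK IH. Qed.
Lemma sim_run p s :
  run_passes simA p s = enc (iter p (fun x => endp (foldl step x s)) init).
Proof. elim: p => [|p IH] //=. by rewrite IH sim_fold encK. Qed.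
Lemma sim_output p s :
  output simA p s = out (iter p (fun x => endp (foldl step x s)) init).
Proof. by rewrite /output sim_run /= encK. Qed.
End Sim.

Lemma card_memory S : #|memory S| = 2 ^ S.
Proof. by rewrite card_ffun card_bool card_ord. Qed.

Lemma enc_exists (X : finType) S : #|X| <= 2 ^ S ->
  exists enc : X -> memory S, injective enc.
Proof.
rewrite -card_memory => h.
exists (fun x => enum_val (widen_ord h (enum_rank x))).
move=> x y /enum_val_inj /(congr1 val) /= /val_inj /enum_rank_inj //.
Qed.

Lemma card_setT (T : finType) : #|{set T}| = 2 ^ #|T|.
Proof. by have := card_powerset [set: T]; rewrite powersetT !cardsT. Qed.

Lemma count_perm_enum (T : finType) (E : {set T}) s (p : pred T) :
  perm_eq s (enum E) -> count p s = #|[set e in E | p e]|.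
Proof.
move=> hs; rewrite (permP hs) -size_filter cardE; apply: perm_size.
apply: uniq_perm; first exact/filter_uniq/enum_uniq.
  exact: enum_uniq.
by move=> x; rewrite mem_filter !mem_enum inE andbC.
Qed.

Section Graph.
Variable n' : nat.
Local Notation n := n'.+1.
Local Notation V := 'I_n.
Variable E : {set {set V}}.
Hypothesis hE : simple_graph E.

Definition adj (a b : V) := [set a; b] \in E.
Definition sim (a b : V) := (a == b) || ~~ adj a b.

Lemma adj_sym a b : adj a b = adj b a.
Proof. by rewrite /adj setUC. Qed.
Lemma sim_sym a b : sim a b = sim b a.
Proof. by rewrite /sim adj_sym eq_sym. Qed.
Lemma simxx a : sim a a.
Proof. by rewrite /sim eqxx. Qed.
Lemma adj_neq a b : adj a b -> a != b.
Proof. by move=> /hE; rewrite cards2; case: (a != b). Qed.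

Lemma edge2 e : e \in E -> exists a b, [/\ a != b, e = [set a; b] & adj a b].
Proof.
move=> he; have /eqP/cards2P [a [b [ab eab]]] := hE he.
by exists a, b; split => //; rewrite /adj -eab.
Qed.

Lemma witness a b c : sim a c -> sim b c -> ~~ sim a b ->
  induces_coP3 E [set a; b; c].
Proof.
move=> sac sbc /norP [ab]; rewrite negbK => hab.
have ca : c != a.
  by apply/eqP => ec; move: sbc; rewrite ec sim_sym /sim (negbTE ab) hab.
have cb : c != b.
  by apply/eqP => ec; move: sac; rewrite ec /sim (negbTE ab) hab.
have hac : ~~ adj a c by move: sac; rewrite /sim eq_sym (negbTE ca).
have hbc : ~~ adj b c by move: sbc; rewrite /sim eq_sym (negbTE cb).
have hca : ~~ adj c a by rewrite adj_sym.
have hcb : ~~ adj c b by rewrite adj_sym.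
split.
  rewrite setUC cardsU1 cards2 ab !inE (negbTE ca) (negbTE cb) //.
apply/eqP/cards1P; exists [set a; b]; apply/setP => x; rewrite !inE.
apply/andP/eqP => [[hx sx]|->]; last first.
  split => //; apply/subsetP => y; rewrite !inE => /orP [] ->; by rewrite ?orbT.
have /eqP/cards2P [y [z [yz exy]]] := hE hx.
have hy : y \in [set a; b; c] by apply: (subsetP sx); rewrite exy set21.
have hz : z \in [set a; b; c] by apply: (subsetP sx); rewrite exy set22.
have hyz : adj y z by rewrite /adj -exy.
move: hy hz; rewrite !inE -!orbA => hy hz.
case/or3P: hy => /eqP ey; case/or3P: hz => /eqP ez; subst y z.
all: try by rewrite eqxx in yz.
all: try by rewrite (negbTE hac) in hyz.
all: try by rewrite (negbTE hbc) in hyz.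
all: try by rewrite (negbTE hca) in hyz.
all: try by rewrite (negbTE hcb) in hyz.
all: try by rewrite exy.
all: by rewrite exy setUC.
Qed.


Lemma edge_at e u : e \in E -> u \in e ->
  exists v, [/\ u != v, e = [set u; v] & adj u v].
Proof.
move=> he; have [a [b [ab eab hab]]] := edge2 he.
rewrite eab => /set2P [] ->.
  by exists b.
by exists a; rewrite eq_sym ab setUC adj_sym.
Qed.

Definition Pr (u : V) (m : nat) := [exists w : V, (val w == m) && sim u w].
Lemma Pr_ex u : exists m, Pr u m.
Proof. by exists (val u); apply/existsP; exists u; rewrite eqxx simxx. Qed.
Definition r u := ex_minn (Pr_ex u).

Lemma r_lt u m : (r u < m) = [exists w : V, (w < m) && sim u w].
Proof.
rewrite /r; case: ex_minnP => k /existsP [w /andP [/eqP wk suw]] kmin.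
apply/idP/existsP => [km | [w' /andP [w'm suw']]].
  by exists w; rewrite wk km suw.
apply: leq_ltn_trans w'm; apply: kmin; apply/existsP; exists w'; by rewrite eqxx suw'.
Qed.

Lemma r_ltn u : r u < n.
Proof. rewrite r_lt; apply/existsP; exists u; by rewrite ltn_ord simxx. Qed.

Lemma r_min u w : sim u w -> r u <= w.
Proof. move=> h; rewrite -ltnS r_lt; apply/existsP; exists w; by rewrite ltnSn h. Qed.

Definition rv u : V := inord (r u).
Lemma val_rv u : val (rv u) = r u.
Proof. exact: inordK (r_ltn u). Qed.

Lemma sim_rv u : sim u (rv u).
Proof.
have : r u < (r u).+1 by [].
rewrite r_lt => /existsP [w /andP [wl suw]].
have := r_min suw => rw.
have -> : rv u = w by apply: val_inj; rewrite val_rv; apply/eqP; rewrite eqn_leq rw -ltnS wl.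
exact: suw.
Qed.

Definition nbW u (W : {set V}) := #|[set w in W | (w != u) && adj u w]|.
Definition pinc u (W : {set V}) (e : {set V}) := (u \in e) && (e :\ u \subset W).

Lemma count_inc s u W : edge_stream E s -> count (pinc u W) s = nbW u W.
Proof.
move=> hs; rewrite (count_perm_enum _ hs) /nbW.
rewrite -(@card_in_imset _ _ (fun w => [set u; w])); last first.
  move=> w1 w2; rewrite !inE => /andP [_ /andP [w1u _]] _ e12.
  have : w1 \in [set u; w2] by rewrite -e12 set22.
  by case/set2P => // e1; rewrite e1 eqxx in w1u.
apply: eq_card => e; rewrite inE; apply/andP/imsetP.
  move=> [he /andP [ue sub]]; have [v [uv ev huv]] := edge_at he ue.
  exists v => //; rewrite !inE eq_sym uv huv !andbT.
  move: sub; rewrite ev setU1K; last by rewrite inE.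
  by rewrite sub1set.
move=> [v]; rewrite !inE => /andP [vW /andP [vu huv]] ->.
split; first exact: huv.
rewrite /pinc set21 /= setU1K; last by rewrite inE eq_sym.
by rewrite sub1set.
Qed.

Lemma card_lt m : m <= n -> #|[set w : V | w < m]| = m.
Proof.
move=> hm.
have -> : [set w : V | w < m] = [set widen_ord hm i | i : 'I_m].
  apply/setP => w; rewrite inE; apply/idP/imsetP => [lt|[i _ ->]].
    by exists (Ordinal lt) => //; apply: val_inj.
  by rewrite /= ltn_ord.
rewrite card_imset ?card_ord //.
by move=> i j /(congr1 val) /= /val_inj.
Qed.

Lemma card_lt_le m : #|[set w : V | w < m]| <= m.
Proof.
case: (leqP m n) => hm; first by rewrite card_lt.
apply: leq_trans (ltnW hm); exact: (leq_trans (max_card _)) (eq_leq (card_ord _)).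
Qed.

Lemma P_cnt u m : (r u < m) = (minn (nbW u [set w : V | w < m]) n < m).
Proof.
rewrite /nbW; set A := [set w : V | w < m]; set B := [set w in A | _].
have BA : B \subset A by apply/subsetP => w; rewrite inE => /andP [].
apply/idP/idP => [ru | ].
  move: ru; rewrite r_lt => /existsP [w0 /andP [w0m s0]].
  have : #|B| < #|A|.
    apply: proper_card; apply/properP; split => //; exists w0; first by rewrite inE.
    by rewrite !inE w0m /=; move: s0; rewrite /sim eq_sym; case: (w0 == u); case: (adj u w0).
  move=> h; apply: leq_ltn_trans (geq_minl _ _) _; exact: leq_trans h (card_lt_le m).
apply: contraTT; rewrite -leqNgt => ru.
have hu : m <= u by apply: leq_trans ru (r_min (simxx u)).
have -> : B = A.
  apply/setP => w; rewrite !inE; case wm: (w < m) => //=.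
  have : ~~ sim u w by apply: contraTN wm => h; rewrite -leqNgt; exact: leq_trans ru (r_min h).
  by rewrite /sim negb_or negbK eq_sym.
have mn : m <= n by apply: leq_trans hu (ltnW (ltn_ord u)).
by rewrite card_lt // (minn_idPl mn) ltnn.
Qed.

Lemma deg_compl u : nbW u [set: V] + #|[set w | sim u w]| = n.
Proof.
rewrite /nbW addnC.
have -> : [set w in [set: V] | (w != u) && adj u w] = ~: [set w | sim u w].
  by apply/setP => w; rewrite !inE /sim negb_or negbK eq_sym.
by rewrite cardsC card_ord.
Qed.

Lemma deg_lt u : nbW u [set: V] < n.
Proof.
have h := deg_compl u.
have : 0 < #|[set w | sim u w]| by rewrite card_gt0; apply/set0Pn; exists u; rewrite inE simxx.
lia.
Qed.

End Graph.

Lemma bs_arith r j :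
  (if r < 2 ^ j.+1 * (r %/ 2 ^ j.+1) + 2 ^ j then 2 ^ j.+1 * (r %/ 2 ^ j.+1)
   else 2 ^ j.+1 * (r %/ 2 ^ j.+1) + 2 ^ j) = 2 ^ j * (r %/ 2 ^ j).
Proof.
have d0 : 0 < 2 ^ j by rewrite expn_gt0.
rewrite expnSr divnMA.
set d := 2 ^ j in d0 *; set x := r %/ d.
have er : r = x * d + r %% d by rewrite /x -divn_eq.
have hr : r %% d < d by rewrite ltn_pmod.
have ex : x = x %/ 2 * 2 + x %% 2 by rewrite -divn_eq.
have hx : x %% 2 < 2 by rewrite ltn_pmod.
move: er hr ex hx; set y := x %/ 2; set b := x %% 2; set rho := r %% d => er hr ex hx.
rewrite er ex.
case: b hx ex => [|[|//]] _ ex; case: ifP => h; nia.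
Qed.

Section Alg.
Variable n' : nat.
Local Notation n := n'.+1.
Local Notation V := 'I_n.
Definition L := (trunc_log 2 n).+1.
Local Notation Cnt := {ffun V -> 'I_n.+1}.
Local Notation Pers := ('I_L.+1 * Cnt * Cnt * option {set V} * {set V})%type.
Local Notation Coll := (Cnt * Cnt * option {set V} * {set V})%type.
Local Notation X := (Pers * Coll)%type.

Definition incr (x : 'I_n.+1) : 'I_n.+1 := inord (minn x.+1 n).
Definition cstep (p : V -> {set V} -> bool) (f : Cnt) (e : {set V}) : Cnt :=
  [ffun u => if p u e then incr (f u) else f u].
Definition bstep (q : pred {set V}) (b : option {set V}) (e : {set V}) :=
  if q e then Some e else b.
Definition rstep (v : V) (R : {set V}) (e : {set V}) := if v \in e then R :|: e else R.

Definition tP (p : Pers) := p.1.1.1.1.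
Definition loP (p : Pers) := p.1.1.1.2.
Definition dgP (p : Pers) := p.1.1.2.
Definition bdP (p : Pers) := p.1.2.
Definition rwS (p : Pers) := p.2.

Definition mid (t : nat) (lo : Cnt) (u : V) := (lo u : nat) + 2 ^ (L - t.+1).
Definition pcnt (p : Pers) (u : V) (e : {set V}) :=
  pinc u [set w : V | w < mid (tP p) (loP p) u] e.
Definition pdeg (u : V) (e : {set V}) := pinc u [set: V] e.
Definition u0 (lo dg : Cnt) := [pick u : V | dg u + #|[set w | lo w == lo u]| != n].
Definition v0 (p : Pers) := odflt ord0 (u0 (loP p) (dgP p)).
Definition badE (lo : Cnt) (e : {set V}) := [forall x in e, [forall y in e, lo x == lo y]].

Definition stepC (p : Pers) (c : Coll) (e : {set V}) : Coll :=
  (cstep (pcnt p) c.1.1.1 e, cstep pdeg c.1.1.2 e,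
   bstep (badE (loP p)) c.1.2 e, rstep (v0 p) c.2 e).
Definition c0 : Coll := ([ffun _ => ord0], [ffun _ => ord0], None, set0).
Definition updP (p : Pers) (c : Coll) : Pers :=
  (inord (minn (tP p).+1 L),
   if tP p < L then [ffun u => if c.1.1.1 u < mid (tP p) (loP p) u then loP p u
                               else inord (mid (tP p) (loP p) u)]
   else loP p,
   c.1.1.2, c.1.2, c.2).
Definition pi0 : Pers := (ord0, [ffun _ => ord0], [ffun _ => ord0], None, set0).
Definition stepX (x : X) (e : {set V}) : X := (x.1, stepC x.1 x.2 e).
Definition endX (x : X) : X := (updP x.1 x.2, c0).

Definition outP (p : Pers) : option {set V} :=
  match bdP p with
  | Some e => Some (e :|: [set (inord (loP p (odflt ord0 [pick x in e])) : V)])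
  | None =>
    match u0 (loP p) (dgP p) with
    | Some u =>
      match [pick w | (w \notin rwS p) && (loP p w != loP p u)] with
      | Some w => if loP p u < loP p w then Some [set w; (inord (loP p u) : V); u]
                  else Some [set u; (inord (loP p w) : V); w]
      | None => None
      end
    | None => None
    end
  end.
Definition outX (x : X) := outP x.1.

Definition passP s (p : Pers) := updP p (foldl (stepC p) c0 s).

Lemma fold_stepX p c s : foldl stepX (p, c) s = (p, foldl (stepC p) c s).
Proof. by elim: s c => [|e s IH] c //=; rewrite IH. Qed.

Lemma fold_stepC p c s : foldl (stepC p) c s =
  (foldl (cstep (pcnt p)) c.1.1.1 s, foldl (cstep pdeg) c.1.1.2 s,
   foldl (bstep (badE (loP p))) c.1.2 s, foldl (rstep (v0 p)) c.2 s).
Proof. by elim: s c => [|e s IH] [[[a b] c'] d] //=; rewrite IH. Qed.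

Lemma iter_X k s : iter k (fun x => endX (foldl stepX x s)) (pi0, c0) =
  (iter k (passP s) pi0, c0).
Proof. by elim: k => //= k ->; rewrite fold_stepX. Qed.

Lemma val_incr x : val (incr x) = minn x.+1 n.
Proof. by rewrite /incr; apply: inordK; rewrite ltnS geq_minr. Qed.

Lemma fold_cstep p f s u :
  val (foldl (cstep p) f s u) = minn (f u + count (p u) s) n.
Proof.
elim: s f => [|e s IH] f /=.
  by rewrite addn0; apply/esym/minn_idPl; rewrite -ltnS ltn_ord.
rewrite IH ffunE; case: (p u e) => /=; last by rewrite add0n.
rewrite val_incr; lia.
Qed.

Lemma fold_bstep q b s :
  (foldl (bstep q) b s = b /\ ~~ has q s) \/
  exists e, [/\ foldl (bstep q) b s = Some e, e \in s & q e].
Proof.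
elim: s b => [|e s IH] b /=; first by left.
case: (IH (bstep q b e)) => [[-> hn]|[e' [-> hin hq]]]; last first.
  by right; exists e'; rewrite in_cons hin orbT.
rewrite /bstep; case qe: (q e).
  by right; exists e; rewrite mem_head.
by left.
Qed.

Lemma fold_rstep v R s w :
  (w \in foldl (rstep v) R s) = (w \in R) || has (fun e : {set V} => (v \in e) && (w \in e)) s.
Proof.
elim: s R => [|e s IH] R /=; first by rewrite orbF.
rewrite IH /rstep; case: (v \in e) => /=; last by [].
by rewrite inE orbA.
Qed.
End Alg.

Section Correct.
Variable n' : nat.
Local Notation n := n'.+1.
Local Notation V := 'I_n.
Local Notation Cnt := {ffun V -> 'I_n.+1}.
Local Notation Pers := ('I_(L n').+1 * Cnt * Cnt * option {set V} * {set V})%type.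
Variable E : {set {set V}}.
Hypothesis hE : simple_graph E.
Variable s : seq {set V}.
Hypothesis hs : edge_stream E s.

Lemma s_mem e : (e \in s) = (e \in E).
Proof. by rewrite (perm_mem hs) mem_enum. Qed.

Section Out.
Variable p : Pers.
Hypothesis H1 : forall u, (loP p u : nat) = r E u.
Hypothesis H2 : forall u, (dgP p u : nat) = nbW E u [set: V].
Hypothesis H3 : bdP p = foldl (bstep (badE (loP p))) None s.
Hypothesis H4 : rwS p = foldl (rstep (odflt ord0 (u0 (loP p) (dgP p)))) set0 s.

Lemma loeq x y : (loP p x == loP p y) = (r E x == r E y).
Proof. by rewrite -val_eqE /= !H1. Qed.

Lemma inlo a : (inord (loP p a) : V) = rv E a.
Proof. by rewrite /rv H1. Qed.

Lemma outP_correct :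
  match outP p with
  | Some T => induces_coP3 E T
  | None => forall T, ~ induces_coP3 E T
  end.
Proof.
rewrite /outP H3.
case: (fold_bstep (badE (loP p)) None s) => [[-> nob] | [e [-> es be]]]; last first.
  rewrite s_mem in es.
  have [a [b [ab eab hab]]] := edge2 hE es.
  have rab : r E a = r E b.
    move/forall_inP: be => /(_ a); rewrite eab set21 => /(_ isT) /forall_inP /(_ b).
    by rewrite set22 => /(_ isT); rewrite loeq => /eqP.
  case: pickP => [x xe | /(_ a)]; last by rewrite eab set21.
  have -> : (inord (loP p x) : V) = rv E a.
    rewrite inlo /rv; move: xe; rewrite eab => /set2P [] -> //.
    by rewrite rab.
  rewrite eab; apply: (witness hE) => //; first exact: sim_rv.
    by rewrite /rv rab; exact: sim_rv.
  by rewrite /sim negb_or ab hab.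
have nobE : forall a b, adj E a b -> r E a != r E b.
  move=> a b hab; apply/negP => /eqP rab; move/hasP: nob; apply.
  exists [set a; b]; first by rewrite s_mem.
  apply/forall_inP => x /set2P hx; apply/forall_inP => y /set2P hy.
  by rewrite loeq; case: hx => ->; case: hy => ->; rewrite ?rab.
have simr : forall u w, r E w = r E u -> sim E u w.
  move=> u w ruw; rewrite /sim; case: eqP => //= _.
  by apply/negP => /nobE; rewrite ruw eqxx.
have clsE : forall u, [set w | loP p w == loP p u] = [set w | r E w == r E u].
  by move=> u; apply/setP => w; rewrite !inE loeq.
rewrite H4 /u0; case: pickP => [u hu | hnone]; last first.
  have eqs : forall u w, sim E u w -> r E u = r E w.
    move=> u w suw; have := hnone u => /= /negbFE; rewrite H2 clsE => /eqP hn.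
    have sub : [set w | r E w == r E u] \subset [set w | sim E u w].
      by apply/subsetP => x; rewrite !inE => /eqP /simr.
    have hc0 := @deg_compl _ E u.
    have hn' : nbW E u [set: V] + #|[set w | r E w == r E u]| = n := hn.
    have hc : #|[set w | r E w == r E u]| = #|[set w | sim E u w]| by lia.
    have eqset : [set w | r E w == r E u] = [set w | sim E u w].
      by apply/eqP; rewrite eqEcard sub hc leqnn.
    have : w \in [set w | sim E u w] by rewrite inE.
    by rewrite -eqset inE => /eqP.
  move=> T [h3 /eqP /cards1P [e ee]].
  have : e \in [set x in E | x \subset T] by rewrite ee set11.
  rewrite inE => /andP [eE eT].
  have [a [b [ab eab hab]]] := edge2 hE eE.
  have : ~~ (T \subset e).
    apply/negP => /subset_leq_card; rewrite h3 (hE eE) //.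
  case/subsetPn => c cT ce.
  have aT : a \in T by apply: (subsetP eT); rewrite eab set21.
  have bT : b \in T by apply: (subsetP eT); rewrite eab set22.
  have nadj : forall x, x \in e -> sim E x c.
    move=> x xe; rewrite /sim; case: eqP => [xc|_ /=]; first by move: ce; rewrite -xc xe.
    apply/negP => hxc.
    have : [set x; c] \in [set x in E | x \subset T].
      rewrite inE; apply/andP; split; first exact: hxc.
      apply/subsetP => y /set2P [] ->//.
      exact: (subsetP eT).
    by rewrite ee => /set1P exc; move: ce; rewrite -exc set22.
  have ae : a \in e by rewrite eab set21.
  have be : b \in e by rewrite eab set22.
  have ra := eqs _ _ (nadj a ae).
  have rb := eqs _ _ (nadj b be).
  by move: (nobE _ _ hab); rewrite ra rb eqxx.
have /existsP [w /andP [suw rwu]] : [exists w, sim E u w && (r E w != r E u)].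
  apply: contraT => /existsPn hall.
  move: hu; rewrite H2 clsE.
  have -> : [set w | r E w == r E u] = [set w | sim E u w].
    apply/setP => x; rewrite !inE; apply/idP/idP => [/eqP /simr //| sx].
    by have := hall x; rewrite negb_and sx /= negbK.
  by rewrite deg_compl => /eqP.
rewrite /=.
have notin : forall x, x != u -> sim E u x -> x \notin foldl (rstep u) set0 s.
  move=> x xu sx; rewrite fold_rstep inE /=; apply/hasP => [[e' es' /andP [ue xe]]].
  rewrite s_mem in es'; have [v [uv ev huv]] := edge_at hE es' ue.
  move: xe; rewrite ev => /set2P [] ex; subst x.
    by rewrite eqxx in xu.
  by move: sx; rewrite /sim (negbTE uv) huv.
case: pickP => [x /andP [xn lx] | /(_ w)]; last first.
  have wu : w != u by apply: contraNneq rwu => ->.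
  by rewrite notin // loeq rwu.
have sux : sim E u x.
  rewrite /sim; case: eqP => [//|/eqP ux /=].
  apply/negP => hux; move: xn; rewrite fold_rstep inE /=; apply/negP/negPn.
  by apply/hasP; exists [set u; x]; rewrite ?s_mem ?set21 ?set22.
rewrite loeq in lx.
rewrite !inlo !H1; case: ltnP => hlt.
  apply: (witness hE); first by rewrite sim_sym.
    by rewrite sim_sym; exact: sim_rv.
  apply/negP => /r_min; rewrite val_rv; lia.
apply: (witness hE) => //; first by rewrite sim_sym; exact: sim_rv.
apply/negP => /r_min; rewrite val_rv.
move: lx hlt; lia.
Qed.
End Out.
End Correct.

Section Final.
Variable n' : nat.
Local Notation n := n'.+1.
Local Notation V := 'I_n.
Local Notation Cnt := {ffun V -> 'I_n.+1}.
Local Notation Pers := ('I_(L n').+1 * Cnt * Cnt * option {set V} * {set V})%type.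
Variable E : {set {set V}}.
Hypothesis hE : simple_graph E.
Variable s : seq {set V}.
Hypothesis hs : edge_stream E s.

Lemma tP_pass (q : Pers) : tP (passP s q) = inord (minn (tP q).+1 (L n')).
Proof. by []. Qed.

Lemma loP_pass (q : Pers) : loP (passP s q) =
  if tP q < L n' then [ffun u => if foldl (cstep (pcnt q)) [ffun _ => ord0] s u < mid (tP q) (loP q) u
                                 then loP q u else inord (mid (tP q) (loP q) u)]
  else loP q.
Proof. by rewrite /passP /updP fold_stepC. Qed.

Lemma dg_pass (q : Pers) : dgP (passP s q) = foldl (cstep (@pdeg n')) [ffun _ => ord0] s.
Proof. by rewrite /passP /updP fold_stepC. Qed.

Lemma bd_pass (q : Pers) : bdP (passP s q) = foldl (bstep (badE (loP q))) None s.
Proof. by rewrite /passP /updP fold_stepC. Qed.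

Lemma rw_pass (q : Pers) : rwS (passP s q) = foldl (rstep (v0 q)) set0 s.
Proof. by rewrite /passP /updP fold_stepC. Qed.

Lemma dg_val u : (foldl (cstep (@pdeg n')) [ffun _ => ord0] s u : nat) = nbW E u [set: V].
Proof.
rewrite fold_cstep ffunE add0n.
have -> : count (pdeg u) s = nbW E u [set: V] by exact: count_inc.
by apply/minn_idPl/ltnW/deg_lt.
Qed.

Lemma bs_inv k : k <= L n' ->
  (tP (iter k (passP s) (pi0 n')) : nat) = k /\
  forall u, (loP (iter k (passP s) (pi0 n')) u : nat) = 2 ^ (L n' - k) * (r E u %/ 2 ^ (L n' - k)).
Proof.
elim: k => [_|k IH hk].
  split => // u; rewrite /loP /= ffunE subn0 divn_small ?muln0 //.
  apply: ltn_trans (r_ltn E u) _; exact: trunc_log_ltn.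
have [ht hl] := IH (ltnW hk).
rewrite iterS; set q := iter k (passP s) (pi0 n') in ht hl *.
split.
  by rewrite tP_pass inordK ht; [apply/minn_idPl | rewrite ltnS geq_minr].
move=> u; rewrite loP_pass ht hk ffunE.
have cnt : (foldl (cstep (pcnt q)) [ffun _ => ord0] s u : nat) =
    minn (nbW E u [set w : V | w < mid (tP q) (loP q) u]) n.
  by rewrite fold_cstep ffunE add0n; congr minn; exact: count_inc.
rewrite ht in cnt; rewrite cnt -P_cnt.
have e1 : L n' - k = (L n' - k.+1).+1 by rewrite subnSK.
have hlu := hl u; rewrite e1 in hlu.
have key := bs_arith (r E u) (L n' - k.+1).
rewrite -hlu /mid in key *.
case: ifP => h; rewrite h in key; first by rewrite key.
rewrite inordK; first by rewrite key.
rewrite ltnS; apply: leq_trans (ltnW (r_ltn E u)).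
by rewrite leqNgt h.
Qed.

Lemma final_ok :
  match outP (iter (L n').+1 (passP s) (pi0 n')) with
  | Some T => induces_coP3 E T
  | None => forall T, ~ induces_coP3 E T
  end.
Proof.
have [ht hl] := bs_inv (leqnn (L n')).
set qL := iter (L n') (passP s) (pi0 n') in ht hl.
have hqL : qL = passP s (iter (trunc_log 2 n) (passP s) (pi0 n')) by [].
rewrite iterS -/qL.
have elo : loP (passP s qL) = loP qL by rewrite loP_pass ht ltnn.
have edg : dgP (passP s qL) = dgP qL by rewrite hqL !dg_pass.
apply: (outP_correct hE hs).
- by move=> u; rewrite elo hl subnn expn0 mul1n divn1.
- by move=> u; rewrite dg_pass dg_val.
- by rewrite bd_pass elo.
- by rewrite rw_pass elo edg.
Qed.
End Final.

Lemma lm a b x y : a <= 2 ^ x -> b <= 2 ^ y -> a * b <= 2 ^ (x + y).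
Proof. by move=> ha hb; rewrite expnD leq_mul. Qed.

Notation XT n' := ((('I_(L n').+1 * {ffun 'I_n'.+1 -> 'I_n'.+2} * {ffun 'I_n'.+1 -> 'I_n'.+2}
   * option {set 'I_n'.+1} * {set 'I_n'.+1}) *
  ({ffun 'I_n'.+1 -> 'I_n'.+2} * {ffun 'I_n'.+1 -> 'I_n'.+2} * option {set 'I_n'.+1}
   * {set 'I_n'.+1}))%type).

Lemma card_XT n' : 1 < n'.+1 ->
  #|{: XT n'}| <= 2 ^ (16 * n'.+1 * trunc_log 2 n'.+1).
Proof.
move=> hn.
have l1 : 0 < trunc_log 2 n'.+1 by rewrite trunc_log_gt0.
rewrite !card_prod !card_ffun !card_option !card_setT !card_ord.
have f1 : (L n').+1 <= 2 ^ (L n') by apply: ltn_expl.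
have f2 : n'.+2 ^ n'.+1 <= 2 ^ (L n' * n'.+1).
  rewrite expnM leq_exp2r //; exact: trunc_log_ltn.
have f3 : (2 ^ n'.+1).+1 <= 2 ^ n'.+2.
  have := expn_gt0 2 n'.+1; rewrite [2 ^ n'.+2]expnS; lia.
apply: leq_trans (lm (lm (lm (lm (lm f1 f2) f2) f3) (leqnn (2 ^ n'.+1)))
                     (lm (lm (lm f2 f2) f3) (leqnn (2 ^ n'.+1)))) _.
rewrite leq_exp2l // /L; nia.
Qed.

Theorem corollary26 :
  exists c k : nat, forall n : nat, 2 <= n ->
    exists (p S : nat) (A : stream_alg n S),
      p <= c * trunc_log 2 n /\
      S <= c * n * (trunc_log 2 n) ^ k /\
      solves_IndSub_coP3 A p.
Proof.
exists 16, 1; case => [//|n'] hn.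
have l1 : 0 < trunc_log 2 n'.+1 by rewrite trunc_log_gt0.
have [enc inj] := enc_exists (card_XT hn).
exists (L n').+1, (16 * n'.+1 * trunc_log 2 n'.+1).
exists (@simA n'.+1 _ _ enc (pi0 n', c0 n') (@stepX n') (@endX n') (@outX n')).
split; first by rewrite /L; lia.
split; first by rewrite expn1.
move=> E s hE hs.
rewrite (sim_output inj) iter_X /outX /=.
exact: final_ok.
Qed.
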